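(* Let $k$ be a field of characteristic zero, $X$ a smooth $k$-variety of dimension $d$, $f$ a non-constant regular function on $X$, and $n\ge1$. Then $\mathcal J_n(f)\subseteq\mathcal J_1(f)^{\binom{d-2+n}{d-1}}$. In particular, $\mathcal J_n(f)\subseteq\mathcal J_1(f)^3$ if either (i) $d\ge3$ and $n\ge2$, or (ii) $d=2$ and $n\ge3$.
   Context: $\Omega^{(n)}_f=\mathcal I/\mathcal I^{n+1}$ where $\mathcal I$ is the ideal of the diagonal in $X\times_{\mathbb A^1_k}X$ (fiber product via $f$). $\mathcal J_n(f)=\mathbf{Fitt}_r(\Omega^{(n)}_f)$, $r=\binom{d-1+n}{d-1}-1$; in local coordinates $x_1,\dots,x_d$ it is generated by the maximal minors of the matrix $\mathrm{Jac}_n(f)$ with rows $\beta\in\mathbb N^d$, $0\le|\beta|\le n-1$, columns $\alpha$, $1\le|\alpha|\le n$, and entries $\partial^{\alpha-\beta}f/(\alpha-\beta)!$ if $\alpha\ge\beta$ componentwise and $\alpha\ne\beta$, $0$ otherwise. In particular $\mathcal J_1(f)$ is the ideal generated by $\partial f/\partial x_1,\dots,\partial f/\partial x_d$. *)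

(* Defs.v *)
From HB Require Import structures.
From mathcomp Require Import all_boot all_order all_algebra.
Set Implicit Arguments. Unset Strict Implicit. Unset Printing Implicit Defensive.
Import Order.TTheory GRing.Theory Num.Theory.
Local Open Scope ring_scope.

Section HigherJacobian.
Variables (k : fieldType) (A : comAlgType k) (d n : nat).
(* D i plays the role of the coordinate derivation d/dx_i *)
Variable D : 'I_d -> A -> A.

(* multi-indices with entries <= n (enough: every |alpha| <= n) *)
Definition mindex := {ffun 'I_d -> 'I_n.+1}.
Definition mdeg (a : mindex) : nat := (\sum_(i < d) (a i : nat))%N.

Definition dpow (g : 'I_d -> nat) (f : A) : A :=
  foldr (fun i h => iter (g i) (D i) h) f (enum 'I_d).
Definition mfact (g : 'I_d -> nat) : nat := (\prod_(i < d) (g i)`!)%N.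

Definition rowset : {set mindex} := [set b | (mdeg b <= n.-1)%N].
Definition colset : {set mindex} := [set a | (1 <= mdeg a <= n)%N].

Definition jac_entry (f : A) (b a : mindex) : A :=
  if [forall i, (b i <= a i)%N] && (a != b) then
    ((mfact (fun i => (a i - b i)%N))%:R : k)^-1 *:
      dpow (fun i => (a i - b i)%N) f
  else 0.

Definition Jac_n (f : A) : 'M[A]_(#|rowset|, #|colset|) :=
  \matrix_(i, j) jac_entry f (enum_val i) (enum_val j).

Definition max_minor (f : A) (s : 'I_#|rowset| -> 'I_#|colset|) : A :=
  \det (\matrix_(i, j) Jac_n f i (s j)).

Definition in_Jn (f x : A) : Prop :=
  exists c : {ffun 'I_#|rowset| -> 'I_#|colset|} -> A,
    x = \sum_(s : {ffun 'I_#|rowset| -> 'I_#|colset|} | injectiveb s)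
          c s * max_minor f s.
End HigherJacobian.

Definition in_J1pow (k : fieldType) (A : comAlgType k) (d : nat)
    (D : 'I_d -> A -> A) (N : nat) (f x : A) : Prop :=
  exists c : {ffun 'I_N -> 'I_d} -> A,
    x = \sum_(g : {ffun 'I_N -> 'I_d}) c g * \prod_(j < N) D (g j) f.

Definition is_k_derivation (k : fieldType) (A : comAlgType k) (D : A -> A) :=
  (forall (c : k) (x y : A), D (c *: x + y) = c *: D x + D y) /\
  (forall x y : A, D (x * y) = D x * y + x * D y).

(* Main.v *)
Require Import Defs.
From HB Require Import structures.
From mathcomp Require Import all_boot all_order all_algebra zify.
Import Order.TTheory GRing.Theory Num.Theory.
Local Open Scope ring_scope.

Section J1.
Variables (k : fieldType) (A : comAlgType k) (d : nat) (D : 'I_d -> A -> A) (f : A).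
Local Notation J N x := (in_J1pow D N f x).

Lemma J1_gen N (h : {ffun 'I_N -> 'I_d}) : J N (\prod_(j < N) D (h j) f).
Proof.
exists [ffun g => if g == h then 1 else 0].
rewrite [RHS](bigD1 h) //= ffunE eqxx mul1r [X in _ = _ + X]big1 ?addr0 // => g /negbTE gh.
by rewrite ffunE gh mul0r.
Qed.

Lemma J1_0 N : J N 0.
Proof. by exists [ffun => 0]; rewrite big1 // => g _; rewrite ffunE mul0r. Qed.

Lemma J1_add N x y : J N x -> J N y -> J N (x + y).
Proof.
move=> [c1 ->] [c2 ->]; exists [ffun g => c1 g + c2 g].
by rewrite -big_split; apply: eq_bigr => g _; rewrite ffunE mulrDl.
Qed.

Lemma J1_mull N a x : J N x -> J N (a * x).
Proof.
move=> [c ->]; exists [ffun g => a * c g].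
rewrite big_distrr; apply: eq_bigr => g _. rewrite ffunE; exact: mulrA.
Qed.

Lemma J1_sum N (I : Type) (r : seq I) (P : pred I) (F : I -> A) :
  (forall i, P i -> J N (F i)) -> J N (\sum_(i <- r | P i) F i).
Proof.
move=> H; apply: (big_ind (fun x => J N x)) => //; [exact: J1_0 | exact: J1_add].
Qed.

Lemma J1_mul a b x y : J a x -> J b y -> J (a + b) (x * y).
Proof.
move=> [c1 ->] [c2 ->]; rewrite big_distrl /=; apply: J1_sum => g _.
rewrite big_distrr /=; apply: J1_sum => h _.
have -> : c1 g * \prod_(j < a) D (g j) f * (c2 h * \prod_(j < b) D (h j) f)
   = (c1 g * c2 h) * (\prod_(j < a) D (g j) f * \prod_(j < b) D (h j) f).
  by rewrite mulrACA.
apply: J1_mull.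
pose gh : {ffun 'I_(a + b) -> 'I_d} := [ffun j => match split j with inl i => g i | inr i => h i end].
have E : \prod_(j < a + b) D (gh j) f =
   \prod_(j < a) D (g j) f * \prod_(j < b) D (h j) f.
  rewrite big_split_ord /=; congr (_ * _); apply: eq_bigr => i _; rewrite /gh ffunE.
  case: splitP => j /= Hj; last by move: (ltn_ord i); rewrite Hj; lia.
  by have -> : j = i by apply: val_inj; rewrite /= -Hj.
  case: splitP => j /= Hj; first by move: (ltn_ord j); rewrite -Hj; lia.
  by have -> : j = i by apply: val_inj; move: Hj => /= /eqP; rewrite eqn_add2l => /eqP.
rewrite -E; exact: J1_gen.
Qed.

Lemma J1_mono M N x : (M <= N)%N -> J N x -> J M x.
Proof.
move=> MN; have -> : N = (M + (N - M))%N by rewrite subnKC.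
move=> [c ->]; apply: J1_sum => g _; rewrite big_split_ord /= mulrA mulrAC.
apply: J1_mull.
have <- : \prod_(j < M) D ([ffun j => g (lshift (N - M) j)] j) f = \prod_(i < M) D (g (lshift (N - M) i)) f.
  by apply: eq_bigr => i _; rewrite ffunE.
exact: J1_gen.
Qed.

Lemma J1_one : J 0 1.
Proof. by have := J1_gen _ [ffun i : 'I_0 => match i with Ordinal _ p => False_rect _ (notF p) end]; rewrite big_ord0. Qed.

Lemma J1_seqprod (I : eqType) (r : seq I) (E : I -> A) :
  (forall i, i \in r -> J 1 (E i)) -> J (size r) (\prod_(i <- r) E i).
Proof.
elim: r => [|x r IH] H; first by rewrite big_nil; exact: J1_one.
rewrite big_cons /=; apply: (@J1_mul 1); first by apply: H; rewrite inE eqxx.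
by apply: IH => i ir; apply: H; rewrite inE ir orbT.
Qed.

Lemma J1_D i : J 1 (D i f).
Proof.
have <- : \prod_(j < 1) D ([ffun _ => i] j) f = D i f by rewrite big_ord1 ffunE.
exact: J1_gen.
Qed.

Lemma foldr_one (g : 'I_d -> nat) (i0 : 'I_d) (r : seq 'I_d) :
  uniq r -> (forall i, g i = (i == i0) :> nat) ->
  foldr (fun i h => iter (g i) (D i) h) f r = if i0 \in r then D i0 f else f.
Proof.
move=> ur Hg; elim: r ur => [|x r IH] //= /andP[xr ur].
rewrite IH // inE Hg; case: (eqVneq x i0) => [ex | ne] /=.
  by subst x; rewrite (negbTE xr).
by [].
Qed.

Lemma entry_J1 n (b a : mindex d n) : (1 <= n)%N -> mdeg b = n.-1 -> (mdeg a <= n)%N ->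
  J 1 (jac_entry D f b a).
Proof.
move=> n1 mb ma.
rewrite /jac_entry; case: ifP => [/andP[/forallP le_ba neq_ab] | _]; last exact: J1_0.
set g := fun i => (a i - b i)%N.
have sum_g : (\sum_i g i = mdeg a - mdeg b)%N.
  have -> : mdeg a = (\sum_i g i + mdeg b)%N.
    by rewrite /mdeg -big_split; apply: eq_bigr => i _; rewrite /g /=; rewrite subnK // le_ba.
  by rewrite addnK.
have [i0 ne] : exists i0, a i0 != b i0.
  case: (pickP (fun i => a i != b i)) => [i0 Hi0 | H0]; first by exists i0.
  move: neq_ab => /negP[]; apply/eqP/ffunP => i; apply/eqP.
  by rewrite -[_ == _]negbK H0.
have gi0 : (0 < g i0)%N by rewrite /g subn_gt0 ltn_neqAle le_ba eq_sym ne.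
have Hg : forall i, g i = (i == i0) :> nat.
  have := sum_g; rewrite (bigD1 i0) //= => E.
  have HS : forall s, (g i0 + s = mdeg a - mdeg b)%N -> s = 0%N /\ g i0 = 1%N by move=> s; lia.
  have [/eqP S0 G1] := HS _ E; move: S0.
  rewrite sum_nat_eq0 => /forallP H i.
  case: (eqVneq i i0) => [-> | nei] /=; first by rewrite G1.
  by apply/eqP; move: (H i); rewrite nei.
rewrite /dpow (@foldr_one g i0 _ (enum_uniq _) Hg) mem_enum.
have -> : forall (c : k) (y : A), c *: y = (c *: 1) * y by move=> c y; rewrite -scalerAl mul1r.
apply: J1_mull; exact: J1_D.
Qed.
End J1.

Lemma card_top d' n' :
  ('C(d' + n', d') <= #|[set b : mindex d'.+1 n'.+1 | mdeg b == n']|)%N.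
Proof.
rewrite -card_ord_partitions.
set S := [set t : d'.+1.-tuple 'I_n'.+1 | _].
pose phi (t : d'.+1.-tuple 'I_n'.+1) : mindex d'.+1 n'.+1 :=
  [ffun i => widen_ord (leqnSn _) (tnth t i)].
rewrite -(@card_in_imset _ _ phi S); last first.
  move=> t1 t2 _ _ E; apply: eq_from_tnth => i; apply: val_inj.
  by have := congr1 (fun F : mindex d'.+1 n'.+1 => val (F i)) E; rewrite /phi !ffunE.
apply: subset_leq_card; apply/subsetP => _ /imsetP[t tS ->].
rewrite inE /mdeg; move: tS; rewrite inE big_tuple => /eqP E.
by apply/eqP; rewrite -[X in _ = X]E; apply: eq_bigr => i _; rewrite /phi ffunE.
Qed.

Theorem proposition2p18
  (k : fieldType) (pchar0 : [pchar k] =i pred0)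
  (A : comAlgType k) (d : nat) (d_gt0 : (1 <= d)%N)
  (D : 'I_d -> A -> A)
  (Dder : forall i, is_k_derivation (D i))
  (Dcomm : forall i j (y : A), D i (D j y) = D j (D i y))
  (coords : exists x : 'I_d -> A,
      forall i j, D i (x j) = (if i == j then 1 else 0))
  (f : A) (f_nonconst : forall c : k, f != c%:A)
  (n : nat) (n_gt0 : (1 <= n)%N) :
  (forall x, in_Jn n D f x -> in_J1pow D 'C(n + d - 2, d - 1) f x) /\
  (((3 <= d)%N && (2 <= n)%N) || ((d == 2%N) && (3 <= n)%N) ->
     forall x, in_Jn n D f x -> in_J1pow D 3 f x).
Proof.
have P1 : forall x, in_Jn n D f x -> in_J1pow D 'C(n + d - 2, d - 1) f x.
  move=> x [c ->]; apply: J1_sum => s _; apply: J1_mull.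
  rewrite /max_minor /determinant; apply: J1_sum => σ _; apply: J1_mull.
  pose P := fun i : 'I_#|rowset d n| => mdeg (enum_val i) == n.-1.
  rewrite (bigID P) /= mulrC; apply: J1_mull.
  rewrite -big_filter deprecated_filter_index_enum.
  apply: (@J1_mono _ _ _ D f _ (size (enum P))); last first.
    apply: J1_seqprod => i; rewrite mem_enum /P => /eqP Pi.
    rewrite !mxE; apply: entry_J1 => //.
    set j := s _; have := enum_valP j.
    by rewrite /colset inE => /andP[].
  rewrite -cardE.
  have x0in : [ffun => ord0] \in rowset d n.
    by rewrite /rowset inE /mdeg big1 // => i _; rewrite ffunE.
  pose h := enum_rank_in x0in.
  have Bsub : forall b : mindex d n, mdeg b == n.-1 -> b \in rowset d n.
    by move=> b /eqP Eb; rewrite /rowset inE Eb.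
  apply: (@leq_trans #|h @: [set b : mindex d n | mdeg b == n.-1]|); last first.
    apply: subset_leq_card; apply/subsetP => _ /imsetP[b bB ->].
    rewrite inE in bB; rewrite unfold_in /P enum_rankK_in ?bB //; exact: Bsub.
  rewrite (@card_in_imset _ _ h); last first.
    move=> b1 b2; rewrite !inE => B1 B2 E.
    by rewrite -(enum_rankK_in x0in (Bsub _ B1)) -(enum_rankK_in x0in (Bsub _ B2)) -/h E.
  case: d d_gt0 {D Dder Dcomm coords c s σ P x0in h Bsub} => [//|d'] _.
  case: n n_gt0 => [//|n'] _.
  have -> : (n'.+1 + d'.+1 - 2 = d' + n')%N by lia.
  rewrite subn1 /=; exact: card_top.
split => // Hc x Hx; apply: (@J1_mono _ _ _ D f _ _ _ _ (P1 x Hx)).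
case/orP: Hc => /andP[Hd Hn].
  apply: (leq_trans Hd); apply: (@leq_trans 'C(d, d - 1)).
    by rewrite bin_sub ?bin1 // ltnW.
  by apply: leq_bin2l; lia.
rewrite (eqP Hd) subn1 /= bin1; lia.
Qed.
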